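(* Let $\mathrm{Sol}$ be $\mathbb{R}^3$ with Riemannian metric $e^{-2z}dx^2+e^{2z}dy^2+dz^2$ and let $\mathcal{S}_r$ be the metric sphere of radius $r$ centered at the origin. Then $N_{X,r}=N_{Y,r}=2$.
   Context: $\eta_X(x,y,z)=(0,y,z)$ and $\eta_Y(x,y,z)=(x,0,z)$ are the projections onto the planes $\{x=0\}$ and $\{y=0\}$. For $W\in\{X,Y\}$, $N_{W,r}$ is the smallest integer $N$ such that the restriction of $\eta_W$ to $\mathcal{S}_r$ is at most $N$-to-$1$. *)

(* Defs.v *)
From Stdlib Require Import Reals List.
From Coquelicot Require Import Coquelicot.
Open Scope R_scope.

Definition pt := (R * R * R)%type.
Definition px (p : pt) : R := fst (fst p).
Definition py (p : pt) : R := snd (fst p).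
Definition pz (p : pt) : R := snd p.
Definition origin : pt := (0, 0, 0).

(* A C^1 curve gamma = (gx, gy, gz) : [0,1] -> R^3 (components given on all
   of R, differentiable with continuous derivative). *)
Definition C1 (f : R -> R) : Prop :=
  (forall t, ex_derive f t) /\ (forall t, continuous (Derive f) t).

Record curve := mkCurve { gx : R -> R; gy : R -> R; gz : R -> R }.

Definition admissible (g : curve) (p q : pt) : Prop :=
  C1 (gx g) /\ C1 (gy g) /\ C1 (gz g) /\
  (gx g 0, gy g 0, gz g 0) = p /\ (gx g 1, gy g 1, gz g 1) = q.

Definition sol_length (g : curve) : R :=
  RInt (fun t => sqrt (exp (-2 * gz g t) * (Derive (gx g) t)^2
                       + exp (2 * gz g t) * (Derive (gy g) t)^2
                       + (Derive (gz g) t)^2)) 0 1.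

Definition sol_dist (p q : pt) : Rbar :=
  Glb_Rbar (fun l => exists g, admissible g p q /\ l = sol_length g).

Definition sphere (r : R) (p : pt) : Prop := sol_dist origin p = Finite r.

Definition etaX (p : pt) : pt := (0, py p, pz p).
Definition etaY (p : pt) : pt := (px p, 0, pz p).

Definition at_most_N_to_1 (f : pt -> pt) (S : pt -> Prop) (N : nat) : Prop :=
  forall (q : pt) (l : list pt), NoDup l ->
    (forall p, In p l -> S p /\ f p = q) -> (length l <= N)%nat.

Definition is_N (f : pt -> pt) (r : R) (N : nat) : Prop :=
  at_most_N_to_1 f (sphere r) N /\
  forall M : nat, at_most_N_to_1 f (sphere r) M -> (N <= M)%nat.

(* Main.v *)
Require Import Defs.
From Stdlib Require Import Reals List.
From Coquelicot Require Import Coquelicot.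
From Stdlib Require Import Lra Psatz Classical.
Open Scope R_scope.


Lemma cmul (f g : R -> R) x : continuous f x -> continuous g x -> continuous (fun y => f y * g y) x.
Proof. intros; apply (continuous_mult f g x); auto. Qed.
Lemma cplus (f g : R -> R) x : continuous f x -> continuous g x -> continuous (fun y => f y + g y) x.
Proof. intros; apply (continuous_plus f g x); auto. Qed.
Lemma cconst (c : R) x : continuous (fun _ : R => c) x.
Proof. apply continuous_const. Qed.
Lemma cpow2 (f : R -> R) x : continuous f x -> continuous (fun y => (f y)^2) x.
Proof. intros. apply (continuous_ext (fun y => f y * f y)); [intros; simpl; ring | apply cmul; auto]. Qed.
Lemma cexp (f : R -> R) x : continuous f x -> continuous (fun y => exp (f y)) x.
Proof. intros; apply continuous_exp_comp; auto. Qed.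
Lemma cabs (f : R -> R) x : continuous f x -> continuous (fun y => Rabs (f y)) x.
Proof. intros; apply continuous_Rabs_comp; auto. Qed.
Lemma csqrt (f : R -> R) x : continuous f x -> 0 <= f x -> continuous (fun y => sqrt (f y)) x.
Proof. intros. apply (continuous_comp f sqrt); auto.
  apply continuity_pt_filterlim. apply continuity_pt_sqrt; auto. Qed.

Definition integ (g : curve) (t : R) : R :=
  sqrt (exp (-2 * gz g t) * (Derive (gx g) t)^2
        + exp (2 * gz g t) * (Derive (gy g) t)^2 + (Derive (gz g) t)^2).

Lemma len_def g : sol_length g = RInt (integ g) 0 1.
Proof. reflexivity. Qed.

Definition C1s g := Defs.C1 (gx g) /\ Defs.C1 (gy g) /\ Defs.C1 (gz g).

Lemma adm_C1s g p q : admissible g p q -> C1s g.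
Proof. intros (?&?&?&?&?); unfold C1s; auto. Qed.

Lemma integ_arg_ge0 g t : 0 <= exp (-2 * gz g t) * (Derive (gx g) t)^2
        + exp (2 * gz g t) * (Derive (gy g) t)^2 + (Derive (gz g) t)^2.
Proof.
  pose proof (exp_pos (-2 * gz g t)); pose proof (exp_pos (2 * gz g t)).
  assert (0 <= (Derive (gx g) t)^2) by (apply pow2_ge_0).
  assert (0 <= (Derive (gy g) t)^2) by (apply pow2_ge_0).
  assert (0 <= (Derive (gz g) t)^2) by (apply pow2_ge_0).
  nra.
Qed.

Lemma integ_cont g : C1s g -> forall t, continuous (integ g) t.
Proof.
  intros [[Hx1 Hx2] [[Hy1 Hy2] [Hz1 Hz2]]] t. unfold integ.
  apply csqrt; [| apply integ_arg_ge0].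
  pose proof (ex_derive_continuous _ _ (Hz1 t)) as Cz.
  assert (Ce : forall c, continuous (fun u => exp (c * gz g u)) t).
  { intros c. apply cexp. apply cmul; auto. apply cconst. }
  apply cplus; [apply cplus|]; try apply cmul; try apply cpow2; auto.
  all: apply cmul; auto; apply cconst.
Qed.

Lemma integ_ge0 g t : 0 <= integ g t.
Proof. apply sqrt_pos. Qed.

Lemma ex_RInt_cont (f : R -> R) a b : (forall t, continuous f t) -> ex_RInt f a b.
Proof. intros; apply (ex_RInt_continuous (V:=R_CompleteNormedModule)); auto. Qed.

Lemma len_ge0 g : C1s g -> 0 <= sol_length g.
Proof.
  intros H. rewrite len_def. apply RInt_ge_0; [lra| |].
  apply ex_RInt_cont, integ_cont; auto. intros; apply integ_ge0.
Qed.

Lemma C1_id : Defs.C1 (fun t => t).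
Proof.
  split. intros; apply ex_derive_id.
  intros t. apply (continuous_ext (fun _ => 1)). intros; symmetry; apply Derive_id.
  apply cconst.
Qed.

Lemma C1_scal c f : Defs.C1 f -> Defs.C1 (fun t => c * f t).
Proof.
  intros [H1 H2]. split. intros; apply ex_derive_scal; auto.
  intros t. apply (continuous_ext (fun u => c * Derive f u)).
  intros; symmetry; apply Derive_scal. apply cmul; auto; apply cconst.
Qed.

Lemma C1_opp f : Defs.C1 f -> Defs.C1 (fun t => - f t).
Proof.
  intros H. apply (C1_scal (-1)) in H. destruct H as [H1 H2]; split.
  - intros t. eapply ex_derive_ext; [|apply (H1 t)]. intros; simpl; ring.
  - intros t. eapply continuous_ext; [|apply (H2 t)]. intros u; simpl.
    apply Derive_ext. intros; ring.
Qed.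

Definition line (p : pt) : curve :=
  mkCurve (fun t => px p * t) (fun t => py p * t) (fun t => pz p * t).

Lemma line_adm p : admissible (line p) origin p.
Proof.
  destruct p as [[x y] z]; unfold admissible, line, px, py, pz, origin; simpl.
  repeat split; try apply C1_scal; try apply C1_id; f_equal; try f_equal; ring.
Qed.

Definition dist (p : pt) : R := real (sol_dist origin p).

Lemma dist_prop p : sol_dist origin p = Finite (dist p) /\ 0 <= dist p /\
  (forall g, admissible g origin p -> dist p <= sol_length g) /\
  (forall eps, 0 < eps -> exists g, admissible g origin p /\ sol_length g < dist p + eps).
Proof.
  unfold dist, sol_dist.
  destruct (Glb_Rbar_correct (fun l => exists g, admissible g origin p /\ l = sol_length g)) as [Hlb Hgr].
  assert (H0 : Rbar_le 0 (Glb_Rbar (fun l => exists g, admissible g origin p /\ l = sol_length g))).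
  { apply Hgr. intros l [g [Hg ->]]. simpl. apply len_ge0. eapply adm_C1s; eauto. }
  assert (H1 : Rbar_le (Glb_Rbar (fun l => exists g, admissible g origin p /\ l = sol_length g)) (sol_length (line p))).
  { apply Hlb. exists (line p); split; auto; apply line_adm. }
  destruct (Glb_Rbar (fun l => exists g, admissible g origin p /\ l = sol_length g)) as [G| |] eqn:E;
    simpl in H0, H1; try contradiction.
  simpl. split; [auto|split; [auto|split]].
  - intros g Hg. specialize (Hlb (sol_length g)). simpl in Hlb. apply Hlb. exists g; auto.
  - intros eps Heps. apply NNPP; intros Hn.
    assert (Rbar_le (G + eps) G).
    { apply Hgr. intros l [g [Hg ->]]. simpl. apply Rnot_lt_le. intros Hl. apply Hn. exists g; auto. }
    simpl in H. lra.
Qed.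

Lemma exp_le' x y : x <= y -> exp x <= exp y.
Proof. intros H; destruct (Rle_lt_or_eq_dec _ _ H) as [h|h]; [left; apply exp_increasing; auto| subst; lra]. Qed.

Lemma sqrt_ge_abs a b : 0 <= b -> Rabs a <= sqrt (a^2 + b).
Proof. intros; rewrite <- sqrt_Rsqr_abs; apply sqrt_le_1_alt; unfold Rsqr; nra. Qed.

Lemma sqrt_le_K X Y K : 0 <= Y -> 0 <= K -> X <= K^2 * Y -> sqrt X <= K * sqrt Y.
Proof.
  intros HY HK H. rewrite <- (sqrt_pow2 K) by auto. rewrite <- sqrt_mult by nra.
  apply sqrt_le_1_alt; auto.
Qed.

Lemma exp2 z : exp (-2 * z) = exp (- z) * exp (- z).
Proof. rewrite <- exp_plus; f_equal; ring. Qed.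

Lemma adm_start g p : admissible g origin p -> gx g 0 = 0 /\ gy g 0 = 0 /\ gz g 0 = 0.
Proof. intros (_&_&_&H&_). unfold origin in H. injection H as h1 h2 h3; auto. Qed.

Lemma adm_end g p : admissible g origin p -> gx g 1 = px p /\ gy g 1 = py p /\ gz g 1 = pz p.
Proof. intros (_&_&_&_&H). subst p; unfold px, py, pz; simpl; auto. Qed.

Lemma RInt_nonneg_mono (f : R -> R) t : 0 <= t <= 1 -> (forall u, continuous f u) ->
  (forall u, 0 <= f u) -> RInt f 0 t <= RInt f 0 1.
Proof.
  intros Ht Hc Hp.
  rewrite <- (RInt_Chasles f 0 t 1) by (apply ex_RInt_cont; auto).
  assert (0 <= RInt f t 1). { apply RInt_ge_0; [lra|apply ex_RInt_cont; auto|intros; auto]. }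
  unfold plus; simpl. lra.
Qed.

Section Curve.
Variable g : curve.
Variable p : pt.
Hypothesis Hg : admissible g origin p.

Let HC : C1s g := adm_C1s _ _ _ Hg.

Lemma cz : forall u, continuous (gz g) u.
Proof. destruct HC as (_&_&[H _]). intros; apply (ex_derive_continuous (V:=R_NormedModule)); auto. Qed.
Lemma cdx : forall u, continuous (Derive (gx g)) u.
Proof. destruct HC as ([_ H]&_&_). auto. Qed.
Lemma cdz : forall u, continuous (Derive (gz g)) u.
Proof. destruct HC as (_&_&[_ H]). auto. Qed.

Lemma z_bound : forall t, 0 <= t <= 1 -> Rabs (gz g t) <= sol_length g.
Proof.
  intros t Ht. destruct HC as (_&_&[Hz1 Hz2]).
  destruct (adm_start _ _ Hg) as (_&_&Hz0).
  assert (E : RInt (Derive (gz g)) 0 t = gz g t - gz g 0) by (apply RInt_Derive; auto).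
  rewrite Hz0, Rminus_0_r in E. rewrite <- E.
  eapply Rle_trans. apply abs_RInt_le; [lra| apply ex_RInt_cont; auto].
  eapply Rle_trans. apply RInt_nonneg_mono; auto.
  - intros; apply cabs; auto.
  - intros; apply Rabs_pos.
  - rewrite len_def. apply RInt_le; [lra| apply ex_RInt_cont; intros; apply cabs; auto
      | apply ex_RInt_cont, integ_cont; auto|].
    intros u _. unfold integ. rewrite Rplus_comm.
    apply sqrt_ge_abs. pose proof (integ_arg_ge0 g u).
    pose proof (exp_pos (-2 * gz g u)); pose proof (exp_pos (2 * gz g u)).
    assert (0 <= (Derive (gx g) u)^2) by (apply pow2_ge_0).
    assert (0 <= (Derive (gy g) u)^2) by (apply pow2_ge_0). nra.
Qed.

Definition aa (u : R) := exp (- gz g u) * Rabs (Derive (gx g) u).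

Lemma aa_cont : forall u, continuous aa u.
Proof. intros; unfold aa; apply cmul; [apply cexp; apply (continuous_opp (gz g)); apply cz | apply cabs, cdx]. Qed.

Lemma aa_integ : forall u, aa u <= integ g u.
Proof.
  intros u. unfold aa, integ.
  replace (exp (- gz g u) * Rabs (Derive (gx g) u)) with (Rabs (exp (- gz g u) * Derive (gx g) u)).
  2:{ rewrite Rabs_mult, (Rabs_right (exp _)); auto. left; apply exp_pos. }
  replace (exp (-2 * gz g u) * Derive (gx g) u ^ 2) with ((exp (- gz g u) * Derive (gx g) u)^2)
    by (rewrite exp2; ring).
  rewrite Rplus_assoc. apply sqrt_ge_abs.
  pose proof (exp_pos (2 * gz g u)).
  assert (0 <= (Derive (gy g) u)^2) by (apply pow2_ge_0).
  assert (0 <= (Derive (gz g) u)^2) by (apply pow2_ge_0). nra.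
Qed.

Lemma A_le_L : RInt aa 0 1 <= sol_length g.
Proof.
  rewrite len_def. apply RInt_le; [lra|apply ex_RInt_cont, aa_cont|apply ex_RInt_cont, integ_cont; auto|].
  intros; apply aa_integ.
Qed.

Lemma A_ge : exp (- sol_length g) * Rabs (px p) <= RInt aa 0 1.
Proof.
  destruct HC as ([Hx1 Hx2]&_&_).
  destruct (adm_start _ _ Hg) as (Hx0&_&_). destruct (adm_end _ _ Hg) as (Hx1'&_&_).
  assert (E : RInt (Derive (gx g)) 0 1 = gx g 1 - gx g 0) by (apply RInt_Derive; auto).
  rewrite Hx0, Hx1', Rminus_0_r in E. rewrite <- E.
  eapply Rle_trans. apply Rmult_le_compat_l. left; apply exp_pos.
  apply abs_RInt_le; [lra| apply ex_RInt_cont; auto].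
  assert (Es : exp (- sol_length g) * RInt (fun t => Rabs (Derive (gx g) t)) 0 1
    = RInt (fun t => exp (- sol_length g) * Rabs (Derive (gx g) t)) 0 1).
  { symmetry. apply (RInt_scal (V:=R_CompleteNormedModule)). apply ex_RInt_cont; intros; apply cabs; auto. }
  rewrite Es. apply RInt_le; [lra| apply ex_RInt_cont; intros; apply cmul; [apply cconst|apply cabs; auto]
     | apply ex_RInt_cont, aa_cont|].
  intros u Hu. unfold aa. apply Rmult_le_compat_r; [apply Rabs_pos|].
  apply exp_le'. pose proof (z_bound u ltac:(lra)). apply Rabs_le_between in H. lra.
Qed.

Lemma L_ge : exp (- sol_length g) * Rabs (px p) <= sol_length g.
Proof. eapply Rle_trans; [apply A_ge| apply A_le_L]. Qed.

End Curve.


Definition gscale (c : R) (g : curve) : curve :=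
  mkCurve (fun u => c * gx g u) (gy g) (gz g).

Lemma gscale_adm c g x y z : admissible g origin (x, y, z) -> admissible (gscale c g) origin (c * x, y, z).
Proof.
  intros Hg. pose proof (adm_start _ _ Hg) as (h1&h2&h3). pose proof (adm_end _ _ Hg) as (e1&e2&e3).
  destruct Hg as (C1&C2&C3&_&_). unfold px, py, pz in *; simpl in *.
  unfold admissible; simpl. split; [apply C1_scal; auto|split; [auto|split; [auto|split]]].
  rewrite h1, h2, h3. unfold origin. f_equal; try f_equal; ring.
  rewrite e1, e2, e3. auto.
Qed.

Lemma integ_scale c g u : integ (gscale c g) u =
  sqrt (c^2 * (exp (-2 * gz g u) * (Derive (gx g) u)^2)
        + (exp (2 * gz g u) * (Derive (gy g) u)^2 + (Derive (gz g) u)^2)).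
Proof. unfold integ; simpl. rewrite Derive_scal. f_equal. ring. Qed.

Lemma integ_unscale g u : integ g u =
  sqrt ((exp (-2 * gz g u) * (Derive (gx g) u)^2)
        + (exp (2 * gz g u) * (Derive (gy g) u)^2 + (Derive (gz g) u)^2)).
Proof. unfold integ; f_equal; ring. Qed.

Lemma rest_ge0 g u : 0 <= exp (2 * gz g u) * (Derive (gy g) u)^2 + (Derive (gz g) u)^2.
Proof.
  pose proof (exp_pos (2 * gz g u)).
  assert (0 <= (Derive (gy g) u)^2) by (apply pow2_ge_0).
  assert (0 <= (Derive (gz g) u)^2) by (apply pow2_ge_0). nra.
Qed.

Lemma E_ge0 g u : 0 <= exp (-2 * gz g u) * (Derive (gx g) u)^2.
Proof.
  pose proof (exp_pos (-2 * gz g u)).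
  assert (0 <= (Derive (gx g) u)^2) by (apply pow2_ge_0). nra.
Qed.

Lemma integ_scale_le c g u : integ (gscale c g) u <= Rmax 1 (Rabs c) * integ g u.
Proof.
  rewrite integ_scale, integ_unscale. apply sqrt_le_K.
  - pose proof (E_ge0 g u); pose proof (rest_ge0 g u); lra.
  - pose proof (Rmax_l 1 (Rabs c)); lra.
  - pose proof (E_ge0 g u); pose proof (rest_ge0 g u).
    pose proof (Rmax_l 1 (Rabs c)); pose proof (Rmax_r 1 (Rabs c)).
    assert (c^2 <= (Rmax 1 (Rabs c))^2).
    { rewrite <- pow2_abs. pose proof (Rabs_pos c). nra. }
    assert (1 <= (Rmax 1 (Rabs c))^2) by nra.
    nra.
Qed.

Lemma key_pw a b c lam : 0 <= b -> c^2 <= 1 ->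
  sqrt (c^2 * a^2 + b) <= sqrt (a^2 + b) - (1 - c^2)/2 * (2 * lam * Rabs a - lam^2 * sqrt (a^2 + b)).
Proof.
  intros Hb Hc.
  set (s := sqrt (a^2 + b)). set (st := sqrt (c^2 * a^2 + b)).
  assert (Hs : 0 <= s) by apply sqrt_pos. assert (Hst : 0 <= st) by apply sqrt_pos.
  assert (Hs2 : s * s = a^2 + b) by (apply sqrt_sqrt; nra).
  assert (Hst2 : st * st = c^2 * a^2 + b) by (apply sqrt_sqrt; nra).
  set (aa := Rabs a). assert (Ha : aa^2 = a^2) by apply pow2_abs.
  assert (Haa : 0 <= aa) by apply Rabs_pos.
  assert (Hle : st <= s) by nra.
  destruct (Req_dec s 0) as [E|E].
  - assert (a^2 = 0) by nra. assert (aa = 0) by nra. assert (st = 0) by nra.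
    rewrite E; rewrite H1, H0. nra.
  - assert (Hsp : 0 < s) by lra.
    assert (K1 : (s - st) * (s + st) = (1 - c^2) * aa^2) by nra.
    assert (K2 : 2 * s * (s - st) >= (1 - c^2) * aa^2) by nra.
    assert (K3 : (1 - c^2) * (aa - lam * s)^2 >= 0) by (apply Rle_ge, Rmult_le_pos; [lra|apply pow2_ge_0]).
    assert (K4 : 2 * s * (s - st) >= (1 - c^2) * (2 * lam * aa * s - lam^2 * s * s)) by nra.
    assert (K5 : s - st >= (1 - c^2)/2 * (2 * lam * aa - lam^2 * s)).
    { assert (K6 : 0 <= 2 * s * ((s - st) - (1 - c^2)/2 * (2 * lam * aa - lam^2 * s))) by nra.
      destruct (Rle_or_lt 0 ((s - st) - (1 - c^2)/2 * (2 * lam * aa - lam^2 * s))) as [h|h]; [lra|].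
      assert (2 * s * ((s - st) - (1 - c^2)/2 * (2 * lam * aa - lam^2 * s)) < 0).
      { apply Rmult_pos_neg; lra. }
      lra. }
    lra.
Qed.

Lemma RInt_lin (f h : R -> R) a b al be : ex_RInt f a b -> ex_RInt h a b ->
  RInt (fun u => al * f u - be * h u) a b = al * RInt f a b - be * RInt h a b.
Proof.
  intros Hf Hh.
  rewrite (RInt_minus (V:=R_CompleteNormedModule) (fun u => al * f u) (fun u => be * h u)).
  - rewrite (RInt_scal (V:=R_CompleteNormedModule) f), (RInt_scal (V:=R_CompleteNormedModule) h) by auto.
    reflexivity.
  - apply (ex_RInt_scal (V:=R_CompleteNormedModule) f); auto.
  - apply (ex_RInt_scal (V:=R_CompleteNormedModule) h); auto.
Qed.

Lemma gscale_C1s c g : C1s g -> C1s (gscale c g).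
Proof. intros (A&B&C); split; [apply C1_scal; auto|split; auto]. Qed.

Lemma len_scale_le c g p : admissible g origin p ->
  sol_length (gscale c g) <= Rmax 1 (Rabs c) * sol_length g.
Proof.
  intros Hg. pose proof (adm_C1s _ _ _ Hg) as HC.
  rewrite !len_def.
  rewrite <- (RInt_scal (V:=R_CompleteNormedModule)) by (apply ex_RInt_cont, integ_cont; auto).
  apply RInt_le; [lra| apply ex_RInt_cont, integ_cont, gscale_C1s; auto
    | apply ex_RInt_cont; intros; apply cmul; [apply cconst| apply integ_cont; auto]|].
  intros; apply integ_scale_le.
Qed.

Lemma alg1 (I1 I2 c lam : R) : I1 - (1 - c ^ 2) / 2 * (2 * lam * I2 - lam ^ 2 * I1) = (1 + (1 - c ^ 2) / 2 * lam ^ 2) * I1 - (1 - c ^ 2) * lam * I2.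
Proof. field. Qed.

Lemma len_scale_strict c g p lam : admissible g origin p -> c^2 <= 1 ->
  sol_length (gscale c g) <= sol_length g
     - (1 - c^2)/2 * (2 * lam * RInt (aa g) 0 1 - lam^2 * sol_length g).
Proof.
  intros Hg Hc. pose proof (adm_C1s _ _ _ Hg) as HC.
  assert (E : sol_length g - (1 - c^2)/2 * (2 * lam * RInt (aa g) 0 1 - lam^2 * sol_length g)
     = RInt (fun u => (1 + (1 - c^2)/2 * lam^2) * integ g u - ((1 - c^2) * lam) * aa g u) 0 1).
  { rewrite RInt_lin. rewrite len_def. apply alg1.
    apply ex_RInt_cont, integ_cont; auto. apply ex_RInt_cont; intros; eapply aa_cont; eauto. }
  rewrite E, len_def.
  apply RInt_le; [lra| apply ex_RInt_cont, integ_cont, gscale_C1s; auto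
    | apply ex_RInt_cont; intros; apply cplus; [apply cmul; [apply cconst| apply integ_cont; auto]|];
      apply (continuous_opp (fun u => (1 - c ^ 2) * lam * aa g u)); apply cmul; [apply cconst|eapply aa_cont; eauto] |].
  intros u _.
  rewrite integ_scale.
  pose proof (key_pw (exp (- gz g u) * Derive (gx g) u)
     (exp (2 * gz g u) * (Derive (gy g) u)^2 + (Derive (gz g) u)^2) c lam (rest_ge0 g u) Hc) as K.
  assert (Ea : (exp (- gz g u) * Derive (gx g) u)^2 = exp (-2 * gz g u) * (Derive (gx g) u)^2)
    by (rewrite exp2; ring).
  assert (Eb : Rabs (exp (- gz g u) * Derive (gx g) u) = aa g u).
  { unfold aa. rewrite Rabs_mult, (Rabs_right (exp _)); auto. left; apply exp_pos. }
  rewrite Ea, Eb in K. rewrite <- integ_unscale in K. lra.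
Qed.


Lemma dist_ge0 p : 0 <= dist p.
Proof. apply dist_prop. Qed.
Lemma dist_le_len p g : admissible g origin p -> dist p <= sol_length g.
Proof. apply dist_prop. Qed.
Lemma dist_approx p eps : 0 < eps -> exists g, admissible g origin p /\ sol_length g < dist p + eps.
Proof. apply dist_prop. Qed.

Lemma dist_cmp p q k c : 0 <= k ->
  (forall g, admissible g origin p -> sol_length g <= dist p + 1 ->
     exists g', admissible g' origin q /\ sol_length g' <= k * sol_length g - c) ->
  dist q <= k * dist p - c.
Proof.
  intros Hk H. apply Rnot_lt_le. intros Hlt.
  set (d := dist q - (k * dist p - c)).
  assert (Hd : 0 < d) by (unfold d; lra).
  set (eps := Rmin 1 (d / (k + 1))).
  assert (He : 0 < eps). { unfold eps. apply Rmin_glb_lt; [lra|]. apply Rdiv_lt_0_compat; lra. }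
  destruct (dist_approx p eps He) as [g [Hg Hl]].
  assert (eps <= 1) by apply Rmin_l.
  assert (Hed : eps <= d / (k + 1)) by apply Rmin_r.
  destruct (H g Hg ltac:(lra)) as [g' [Hg' Hl']].
  pose proof (dist_le_len q g' Hg').
  assert (k * eps < d).
  { assert (k * eps <= k * (d / (k+1))) by (apply Rmult_le_compat_l; lra).
    assert (k * (d / (k+1)) < d).
    { unfold Rdiv. replace (k * (d * / (k+1))) with (d * (k / (k+1))) by (field; lra).
      assert (k / (k+1) < 1). { apply (Rmult_lt_reg_r (k+1)); [lra|]. unfold Rdiv. rewrite Rmult_assoc, Rinv_l by lra. lra. }
      nra. }
    lra. }
  assert (k * sol_length g <= k * (dist p + eps)) by (apply Rmult_le_compat_l; lra).
  unfold d in *. lra.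
Qed.

Lemma dist_scale c x y z : dist (c * x, y, z) <= Rmax 1 (Rabs c) * dist (x, y, z).
Proof.
  replace (Rmax 1 (Rabs c) * dist (x, y, z)) with (Rmax 1 (Rabs c) * dist (x, y, z) - 0) by ring.
  apply dist_cmp. pose proof (Rmax_l 1 (Rabs c)); lra.
  intros g Hg _. exists (gscale c g). split. apply gscale_adm; auto.
  rewrite Rminus_0_r. eapply len_scale_le; eauto.
Qed.

Lemma dist_scale_strict c x y z : c^2 < 1 -> x <> 0 -> dist (c * x, y, z) < dist (x, y, z).
Proof.
  intros Hc Hx.
  set (B := dist (x, y, z) + 1).
  assert (HB : 1 <= B) by (unfold B; pose proof (dist_ge0 (x,y,z)); lra).
  set (m := exp (- B) * Rabs x).
  assert (Hm : 0 < m) by (unfold m; apply Rmult_lt_0_compat; [apply exp_pos| apply Rabs_pos_lt; auto]).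
  set (lam := m / B).
  assert (Hlam : 0 <= lam) by (unfold lam; apply Rlt_le, Rdiv_lt_0_compat; lra).
  set (k := (1 - c^2)/2). assert (Hk : 0 < k) by (unfold k; lra).
  assert (dist (c * x, y, z) <= 1 * dist (x, y, z) - k * (m * m / B)).
  { apply dist_cmp; [lra|]. intros g Hg HL. exists (gscale c g). split. apply gscale_adm; auto.
    pose proof (len_scale_strict c g (x,y,z) lam Hg ltac:(lra)) as K.
    pose proof (A_ge g (x,y,z) Hg) as Ag. simpl in Ag. unfold px in Ag; simpl in Ag.
    assert (exp (- B) <= exp (- sol_length g)) by (apply exp_le'; unfold B in *; lra).
    assert (Am : m <= RInt (aa g) 0 1).
    { unfold m. eapply Rle_trans; [|apply Ag]. apply Rmult_le_compat_r; [apply Rabs_pos|auto]. }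
    assert (2 * lam * RInt (aa g) 0 1 - lam ^ 2 * sol_length g >= 2 * lam * m - lam^2 * B).
    { assert (lam * m <= lam * RInt (aa g) 0 1) by (apply Rmult_le_compat_l; lra).
      assert (lam^2 * sol_length g <= lam^2 * B) by (apply Rmult_le_compat_l; [nra|unfold B in *; lra]).
      lra. }
    assert (2 * lam * m - lam^2 * B = m * m / B) by (unfold lam; field; lra).
    fold k in K.
    assert (k * (m * m / B) <= k * (2 * lam * RInt (aa g) 0 1 - lam ^ 2 * sol_length g)) by
      (apply Rmult_le_compat_l; lra).
    lra. }
  assert (0 < k * (m * m / B)). { apply Rmult_lt_0_compat; auto. apply Rdiv_lt_0_compat; nra. }
  lra.
Qed.

Definition swapc (g : curve) : curve := mkCurve (gy g) (gx g) (fun u => - gz g u).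

Lemma swap_adm g x y z : admissible g origin (x, y, z) -> admissible (swapc g) origin (y, x, - z).
Proof.
  intros Hg. pose proof (adm_start _ _ Hg) as (h1&h2&h3). pose proof (adm_end _ _ Hg) as (e1&e2&e3).
  destruct Hg as (C1&C2&C3&_&_). unfold px, py, pz in *; simpl in *.
  unfold admissible; simpl. split; [auto|split; [auto|split; [apply C1_opp; auto|split]]].
  rewrite h1, h2, h3. unfold origin. f_equal; try f_equal; ring.
  rewrite e1, e2, e3. auto.
Qed.

Lemma swap_len g : sol_length (swapc g) = sol_length g.
Proof.
  rewrite !len_def. apply RInt_ext. intros u _. unfold integ; simpl.
  rewrite Derive_opp. replace (-2 * - gz g u) with (2 * gz g u) by ring.
  replace (2 * - gz g u) with (-2 * gz g u) by ring. f_equal; ring.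
Qed.

Lemma dist_swap_le x y z : dist (y, x, - z) <= dist (x, y, z).
Proof.
  replace (dist (x, y, z)) with (1 * dist (x, y, z) - 0) by ring.
  apply dist_cmp; [lra|]. intros g Hg _. exists (swapc g). split. apply swap_adm; auto.
  rewrite swap_len; lra.
Qed.

Lemma dist_swap x y z : dist (y, x, - z) = dist (x, y, z).
Proof.
  apply Rle_antisym. apply dist_swap_le.
  pose proof (dist_swap_le y x (- z)) as H. rewrite Ropp_involutive in H. auto.
Qed.

Lemma dist_axis_le s : dist (s, 0, 0) <= Rabs s.
Proof.
  eapply Rle_trans. apply dist_le_len, (line_adm (s, 0, 0)).
  rewrite len_def. unfold line, px, py, pz; simpl.
  rewrite (RInt_ext _ (fun _ => Rabs s)).
  - rewrite RInt_const. unfold scal; simpl. unfold mult; simpl. lra.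
  - intros u _. unfold integ; simpl. rewrite !Derive_scal, !Derive_id.
    replace (-2 * (0 * u)) with 0 by ring. replace (2 * (0 * u)) with 0 by ring.
    rewrite exp_0. rewrite <- sqrt_Rsqr_abs. f_equal. unfold Rsqr. ring.
Qed.

Lemma dist_axis_big r : 0 < r -> r + 1 <= dist ((r + 1) * exp (r + 1), 0, 0).
Proof.
  intros Hr. set (X := (r + 1) * exp (r + 1)).
  apply Rnot_lt_le. intros Hlt.
  destruct (dist_approx (X, 0, 0) (r + 1 - dist (X, 0, 0))) as [g [Hg Hl]]; [lra|].
  pose proof (L_ge g (X, 0, 0) Hg) as K. unfold px in K; simpl in K.
  assert (HX : 0 < X) by (unfold X; apply Rmult_lt_0_compat; [lra|apply exp_pos]).
  rewrite Rabs_right in K by lra.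
  assert (exp (- (r+1)) < exp (- sol_length g)) by (apply exp_increasing; lra).
  assert (exp (- (r+1)) * X = r + 1).
  { unfold X. rewrite <- Rmult_assoc, (Rmult_comm (exp _)), Rmult_assoc, <- exp_plus.
    replace (- (r + 1) + (r + 1)) with 0 by ring. rewrite exp_0; ring. }
  assert (exp (- (r+1)) * X < exp (- sol_length g) * X) by (apply Rmult_lt_compat_r; lra).
  lra.
Qed.


Definition h (s : R) := dist (s, 0, 0).

Lemma h_scale t s : h (t * s) <= Rmax 1 (Rabs t) * h s.
Proof. apply dist_scale. Qed.

Lemma h_close s u : s <> 0 -> Rabs (u - s) < Rabs s / 2 ->
  Rabs (h u - h s) <= 2 * Rabs (u - s) / Rabs s * h s.
Proof.
  intros Hs Hu. set (t := u / s).
  assert (Has : 0 < Rabs s) by (apply Rabs_pos_lt; auto).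
  assert (Ht : Rabs (t - 1) = Rabs (u - s) / Rabs s).
  { unfold t. rewrite <- Rabs_div by auto. f_equal. field; auto. }
  assert (Ht2 : Rabs (t - 1) < 1/2).
  { rewrite Ht. apply (Rmult_lt_reg_r (Rabs s)); auto. unfold Rdiv. rewrite Rmult_assoc, Rinv_l by lra. lra. }
  apply Rabs_def2 in Ht2. destruct Ht2 as [Ht2 Ht3].
  assert (Eu : u = t * s) by (unfold t; field; auto).
  assert (Es : s = (/ t) * u) by (rewrite Eu; field; lra).
  pose proof (h_scale t s) as K1. rewrite <- Eu in K1.
  pose proof (h_scale (/ t) u) as K2. rewrite <- Es in K2.
  assert (Hhs : 0 <= h s) by apply dist_ge0. assert (Hhu : 0 <= h u) by apply dist_ge0.
  replace (2 * Rabs (u - s) / Rabs s * h s) with (2 * Rabs (t - 1) * h s) by (rewrite Ht; field; lra).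
  rewrite Rabs_right with (r := t) in K1 by lra.
  rewrite Rabs_right with (r := / t) in K2 by (apply Rle_ge, Rlt_le, Rinv_0_lt_compat; lra).
  destruct (Rle_or_lt 1 t) as [H1|H1].
  - rewrite Rmax_right in K1 by lra.
    assert (/ t <= 1). { rewrite <- Rinv_1. apply Rinv_le_contravar; lra. }
    rewrite Rmax_left in K2 by lra.
    rewrite Rabs_right by lra. rewrite Rabs_right by lra. nra.
  - rewrite Rmax_left in K1 by lra.
    assert (1 <= / t). { rewrite <- Rinv_1. apply Rinv_le_contravar; lra. }
    rewrite Rmax_right in K2 by lra.
    rewrite Rabs_left1 by lra. rewrite Rabs_left1 by lra.
    assert (Ki : h s - h u <= (/ t - 1) * h u) by lra.
    assert (E1 : (/ t - 1) = (1 - t) / t) by (field; lra).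
    assert (t * (h s - h u) <= (1 - t) * h u).
    { rewrite E1 in Ki. apply (Rmult_le_compat_l t) in Ki; [|lra].
      replace (t * ((1 - t) / t * h u)) with ((1 - t) * h u) in Ki by (field; lra). auto. }
    nra.
Qed.

Lemma h_cont s : continuity_pt h s.
Proof.
  apply continuity_pt_locally. intros eps.
  destruct (Req_dec s 0) as [E|E].
  - subst s. exists eps. intros y Hy. change (Rabs (y - 0) < eps) in Hy.
    assert (h 0 = 0). { pose proof (dist_axis_le 0). pose proof (dist_ge0 (0,0,0)). unfold h. rewrite Rabs_R0 in H. lra. }
    rewrite H, Rminus_0_r. rewrite Rminus_0_r in Hy. pose proof (dist_axis_le y). pose proof (dist_ge0 (y,0,0)).
    unfold h. apply Rle_lt_trans with (Rabs y); [|exact Hy]. rewrite Rabs_right; [exact H0| apply Rle_ge, H1].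
  - assert (Has : 0 < Rabs s) by (apply Rabs_pos_lt; auto).
    assert (Hhs : 0 <= h s) by apply dist_ge0.
    assert (Hd : 0 < Rmin (Rabs s / 2) (eps * Rabs s / (2 * (h s + 1)))).
    { apply Rmin_glb_lt. lra. apply Rdiv_lt_0_compat. apply Rmult_lt_0_compat; [apply cond_pos|auto]. lra. }
    exists (mkposreal _ Hd). intros y Hy. change (Rabs (y - s) < Rmin (Rabs s / 2) (eps * Rabs s / (2 * (h s + 1)))) in Hy.
    assert (H1 : Rabs (y - s) < Rabs s / 2) by (eapply Rlt_le_trans; [apply Hy| apply Rmin_l]).
    assert (H2 : Rabs (y - s) < eps * Rabs s / (2 * (h s + 1))) by (eapply Rlt_le_trans; [apply Hy| apply Rmin_r]).
    eapply Rle_lt_trans. apply h_close; auto.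
    assert (2 * Rabs (y - s) < eps * Rabs s / (h s + 1)).
    { replace (eps * Rabs s / (h s + 1)) with (2 * (eps * Rabs s / (2 * (h s + 1)))) by (field; lra). lra. }
    assert (2 * Rabs (y - s) * (h s + 1) < eps * Rabs s).
    { replace (eps * Rabs s) with (eps * Rabs s / (h s + 1) * (h s + 1)) by (field; lra).
      apply Rmult_lt_compat_r; lra. }
    assert (2 * Rabs (y - s) / Rabs s * h s <= 2 * Rabs (y - s) / Rabs s * (h s + 1)).
    { apply Rmult_le_compat_l; [|lra]. apply Rmult_le_pos; [pose proof (Rabs_pos (y - s)); lra|].
      left; apply Rinv_0_lt_compat; auto. }
    assert (2 * Rabs (y - s) / Rabs s * (h s + 1) < eps).
    { apply (Rmult_lt_reg_r (Rabs s)); auto.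
      replace (2 * Rabs (y - s) / Rabs s * (h s + 1) * Rabs s) with (2 * Rabs (y - s) * (h s + 1)) by (field; lra).
      lra. }
    lra.
Qed.

Lemma exists_axis_point r : 0 < r -> exists s, s <> 0 /\ dist (s, 0, 0) = r.
Proof.
  intros Hr.
  assert (Hc : continuity (fun u => h u - r)).
  { intros u. apply continuity_pt_minus. apply h_cont. apply continuity_pt_const. intros a b; auto. }
  assert (h0 : h 0 = 0). { pose proof (dist_axis_le 0). pose proof (dist_ge0 (0,0,0)). unfold h. rewrite Rabs_R0 in H. lra. }
  set (X := (r + 1) * exp (r + 1)).
  assert (HX : 0 < X) by (unfold X; apply Rmult_lt_0_compat; [lra|apply exp_pos]).
  pose proof (dist_axis_big r Hr) as HB. fold X in HB.
  destruct (IVT (fun u => h u - r) 0 X Hc HX) as [s [Hs1 Hs2]].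
  - rewrite h0; lra.
  - unfold h; lra.
  - exists s. split.
    + intros ->. rewrite h0 in Hs2. lra.
    + unfold h in Hs2. lra.
Qed.


Lemma sphere_iff r p : sphere r p <-> dist p = r.
Proof.
  unfold sphere. rewrite (proj1 (dist_prop p)). split; intros H.
  - injection H; auto.
  - subst; auto.
Qed.

Lemma distX_neg x y z : dist (- x, y, z) = dist (x, y, z).
Proof.
  apply Rle_antisym.
  - pose proof (dist_scale (-1) x y z) as H. rewrite Rabs_m1, Rmax_left in H by lra.
    replace (-1 * x) with (- x) in H by ring. lra.
  - pose proof (dist_scale (-1) (- x) y z) as H. rewrite Rabs_m1, Rmax_left in H by lra.
    replace (-1 * - x) with x in H by ring. lra.
Qed.

Lemma distX_lt x1 x2 y z : Rabs x1 < Rabs x2 -> dist (x1, y, z) < dist (x2, y, z).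
Proof.
  intros H. assert (Hx2 : x2 <> 0). { intros ->. rewrite Rabs_R0 in H. pose proof (Rabs_pos x1). lra. }
  pose proof (dist_scale_strict (x1 / x2) x2 y z) as K.
  replace (x1 / x2 * x2) with x1 in K by (field; auto). apply K; [|exact Hx2].
  assert (Rabs (x1 / x2) < 1).
  { rewrite Rabs_div by auto. apply (Rmult_lt_reg_r (Rabs x2)). apply Rabs_pos_lt; auto.
    unfold Rdiv. rewrite Rmult_assoc, Rinv_l by (apply Rabs_no_R0; auto). lra. }
  rewrite <- pow2_abs. pose proof (Rabs_pos (x1 / x2)) as P.
  generalize dependent (Rabs (x1 / x2)). intros a Ha Pa. clear -Ha Pa. simpl. nra.
Qed.

Lemma distY_neg x y z : dist (x, - y, z) = dist (x, y, z).
Proof. rewrite <- (dist_swap x (- y) z), <- (dist_swap x y z). apply distX_neg. Qed.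

Lemma distY_lt x y1 y2 z : Rabs y1 < Rabs y2 -> dist (x, y1, z) < dist (x, y2, z).
Proof. intros H. rewrite <- (dist_swap x y1 z), <- (dist_swap x y2 z). apply distX_lt; auto. Qed.

Lemma abs_eq_cases a b : Rabs a = Rabs b -> a = b \/ a = - b.
Proof.
  intros H. destruct (Rcase_abs a) as [Ha|Ha]; destruct (Rcase_abs b) as [Hb|Hb].
  - rewrite (Rabs_left a Ha), (Rabs_left b Hb) in H. left; lra.
  - rewrite (Rabs_left a Ha), (Rabs_right b Hb) in H. right; lra.
  - rewrite (Rabs_right a Ha), (Rabs_left b Hb) in H. right; lra.
  - rewrite (Rabs_right a Ha), (Rabs_right b Hb) in H. left; lra.
Qed.

Lemma upper (f : pt -> pt) (c : pt -> R) r :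
  (forall p p', f p = f p' -> p <> p' -> c p <> c p') ->
  (forall p p', f p = f p' -> dist p = dist p' -> Rabs (c p) = Rabs (c p')) ->
  at_most_N_to_1 f (sphere r) 2.
Proof.
  intros Hd Ha q l Hnd Hin.
  destruct l as [|p1 [|p2 [|p3 l]]]; simpl; auto.
  exfalso.
  destruct (Hin p1 ltac:(simpl; auto)) as [S1 F1].
  destruct (Hin p2 ltac:(simpl; auto)) as [S2 F2].
  destruct (Hin p3 ltac:(simpl; auto)) as [S3 F3].
  rewrite sphere_iff in S1, S2, S3.
  inversion Hnd as [|? ? N1 Hnd2]; subst. inversion Hnd2 as [|? ? N2 Hnd3]; subst.
  assert (D12 : p1 <> p2) by (intros ->; apply N1; simpl; auto).
  assert (D13 : p1 <> p3) by (intros ->; apply N1; simpl; auto).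
  assert (D23 : p2 <> p3) by (intros ->; apply N2; simpl; auto).
  assert (E12 : f p1 = f p2) by congruence. assert (E13 : f p1 = f p3) by congruence.
  assert (E23 : f p2 = f p3) by congruence.
  pose proof (Hd _ _ E12 D12). pose proof (Hd _ _ E13 D13). pose proof (Hd _ _ E23 D23).
  assert (A12 : Rabs (c p1) = Rabs (c p2)) by (apply Ha; congruence).
  assert (A13 : Rabs (c p1) = Rabs (c p3)) by (apply Ha; congruence).
  apply abs_eq_cases in A12. apply abs_eq_cases in A13.
  destruct A12 as [A12|A12], A13 as [A13|A13].
  - apply H; lra.
  - apply H1; lra.
  - apply H0; lra.
  - apply H; lra.
Qed.

Lemma not_le_lt_abs a b : ~ Rabs a < Rabs b -> ~ Rabs b < Rabs a -> Rabs a = Rabs b.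
Proof. intros; lra. Qed.

Lemma isN_X r : 0 < r -> is_N etaX r 2.
Proof.
  intros Hr. split.
  - apply (upper etaX px).
    + intros [[x y] z] [[x' y'] z'] E N Ex. unfold etaX, px, py, pz in *; simpl in *.
      injection E as E1 E2. subst. auto.
    + intros [[x y] z] [[x' y'] z'] E Ed. unfold etaX, px, py, pz in *; simpl in *.
      injection E as E1 E2. subst.
      apply not_le_lt_abs; intros H; apply distX_lt with (y := y') (z := z') in H; lra.
  - intros M HM. destruct (exists_axis_point r Hr) as [s [Hs Hd]].
    assert (Hd' : dist (- s, 0, 0) = r) by (rewrite distX_neg; auto).
    specialize (HM (0, 0, 0) ((s, 0, 0) :: (- s, 0, 0) :: nil)).
    simpl in HM. apply HM.
    + constructor. simpl. intros [H|H]; [|auto]. injection H as H. lra.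
      constructor; [simpl; auto| constructor].
    + intros p [<-|[<-|[]]]; split; try (apply sphere_iff; auto); unfold etaX, py, pz; reflexivity.
Qed.

Lemma isN_Y r : 0 < r -> is_N etaY r 2.
Proof.
  intros Hr. split.
  - apply (upper etaY py).
    + intros [[x y] z] [[x' y'] z'] E N Ex. unfold etaY, px, py, pz in *; simpl in *.
      injection E as E1 E2. subst. auto.
    + intros [[x y] z] [[x' y'] z'] E Ed. unfold etaY, px, py, pz in *; simpl in *.
      injection E as E1 E2. subst.
      apply not_le_lt_abs; intros H; apply distY_lt with (x := x') (z := z') in H; lra.
  - intros M HM. destruct (exists_axis_point r Hr) as [s [Hs Hd]].
    assert (Hd1 : dist (0, s, 0) = r) by (pose proof (dist_swap s 0 0) as E; rewrite Ropp_0 in E; rewrite E; auto).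
    assert (Hd' : dist (0, - s, 0) = r) by (rewrite distY_neg; auto).
    specialize (HM (0, 0, 0) ((0, s, 0) :: (0, - s, 0) :: nil)).
    simpl in HM. apply HM.
    + constructor. simpl. intros [H|H]; [|auto]. injection H as H. lra.
      constructor; [simpl; auto| constructor].
    + intros p [<-|[<-|[]]]; split; try (apply sphere_iff; auto); unfold etaY, px, pz; reflexivity.
Qed.

Theorem mainTheorem3 : forall r : R, 0 < r -> is_N etaX r 2 /\ is_N etaY r 2.
Proof. intros r Hr. split; [apply isN_X|apply isN_Y]; auto. Qed.
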